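(* Let $A$ be a real $m\times n$ matrix, $\mathbf b\in\mathbb R^m$, $\mathbf c\in\mathbb R^n$ (row vector), such that the linear program $\max\mathbf c\mathbf x$ s.t. $A\mathbf x\le\mathbf b$, $\mathbf x\ge0$ is bounded with unique optimal primal and dual solutions $\mathbf x^*$, $\mathbf y^*$. Then for every primal feasible $\mathbf x$, \[ \mathbf c(\mathbf x^*-\mathbf x)\ge\alpha_D(A,\mathbf b,\mathbf c)\,\|A_{V,:}(\mathbf x^*-\mathbf x)\|. \]
   Context: The dual is $\min\mathbf y\mathbf b$ s.t. $\mathbf yA\ge\mathbf c$, $\mathbf y\ge0$. $V=\{j:y^*_j>0\}$, $A_{V,:}$ is the submatrix of rows indexed by $V$, and $\alpha_D(A,\mathbf b,\mathbf c)=\min_{j\in V}y^*_j$. $\|\cdot\|$ is the Euclidean norm. *)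

(* Defs.v *)
From HB Require Import structures.
From mathcomp Require Import all_boot all_order all_algebra.
From mathcomp Require Import reals.
Set Implicit Arguments. Unset Strict Implicit. Unset Printing Implicit Defensive.
Import Order.TTheory GRing.Theory Num.Theory.
Local Open Scope ring_scope.

Section LP.
Variables (R : realType) (m n : nat).
Variables (A : 'M[R]_(m, n)) (b : 'cV[R]_m) (c : 'rV[R]_n).

Definition primal_feasible (x : 'cV[R]_n) : Prop :=
  (forall i, (A *m x) i 0 <= b i 0) /\ (forall j, 0 <= x j 0).

Definition primal_obj (x : 'cV[R]_n) : R := (c *m x) 0 0.

Definition dual_feasible (y : 'rV[R]_m) : Prop :=
  (forall j, c 0 j <= (y *m A) 0 j) /\ (forall i, 0 <= y 0 i).

Definition dual_obj (y : 'rV[R]_m) : R := (y *m b) 0 0.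

Definition primal_bounded : Prop :=
  exists M : R, forall x, primal_feasible x -> primal_obj x <= M.

Definition primal_optimal (x : 'cV[R]_n) : Prop :=
  primal_feasible x /\ forall x', primal_feasible x' -> primal_obj x' <= primal_obj x.

Definition dual_optimal (y : 'rV[R]_m) : Prop :=
  dual_feasible y /\ forall y', dual_feasible y' -> dual_obj y <= dual_obj y'.

Definition unique_primal_optimum (xs : 'cV[R]_n) : Prop :=
  primal_optimal xs /\ forall x, primal_optimal x -> x = xs.

Definition unique_dual_optimum (ys : 'rV[R]_m) : Prop :=
  dual_optimal ys /\ forall y, dual_optimal y -> y = ys.
End LP.

(* V = {j : y_j > 0};  alpha_D = min_{j in V} y_j  (set to 0 if V is empty,
   in which case ||A_{V,:} z|| = 0 and the value is irrelevant). *)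
Definition alphaD (R : realType) (m : nat) (y : 'rV[R]_m) : R :=
  match [pick j | 0 < y 0 j] with
  | Some j0 => \big[Num.min/y 0 j0]_(j | 0 < y 0 j) y 0 j
  | None => 0
  end.

Definition normAV (R : realType) (m n : nat) (A : 'M[R]_(m, n)) (y : 'rV[R]_m)
  (z : 'cV[R]_n) : R :=
  Num.sqrt (\sum_(j | 0 < y 0 j) ((A *m z) j 0) ^+ 2).

(* Main.v *)
Require Import Defs.
From HB Require Import structures.
From mathcomp Require Import all_boot all_order all_algebra.
From mathcomp Require Import reals ring lra.
Import Order.TTheory GRing.Theory Num.Theory.
Local Open Scope ring_scope.

Inductive deriv (R : realFieldType) (n : nat) (s : seq ('rV[R]_n * R)) :
  'rV[R]_n -> R -> Prop :=
 | dIn p : p \in s -> deriv R n s p.1 p.2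
 | dZero : deriv R n s 0 0
 | dAdd a b a' b' : deriv R n s a b -> deriv R n s a' b' -> deriv R n s (a + a') (b + b')
 | dScale t a b : 0 <= t -> deriv R n s a b -> deriv R n s (t *: a) (t * b)
 | dWeak a b b' : deriv R n s a b -> b <= b' -> deriv R n s a b'.
Arguments deriv {R n}.
Arguments dIn {R n s}.
Arguments dZero {R n s}.
Arguments dAdd {R n s}.
Arguments dScale {R n s}.
Arguments dWeak {R n s}.

Definition feas {R : realFieldType} {n : nat} (s : seq ('rV[R]_n * R)) (x : 'cV[R]_n) :=
  forall p, p \in s -> (p.1 *m x) 0 0 <= p.2.
Lemma sandwich (R : realFieldType) (Ls Us : seq R) :
  (forall l u, l \in Ls -> u \in Us -> l <= u) ->
  exists x, (forall l, l \in Ls -> l <= x) /\ (forall u, u \in Us -> x <= u).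
Proof.
elim: Ls => [|l Ls IH] H.
  exists (foldr Num.min 0 Us); split => // u.
  elim: Us {H} => // v Us IHU; rewrite in_cons => /orP [/eqP -> | /IHU h] /=.
    by rewrite ge_min lexx.
  by rewrite ge_min h orbT.
have [|x [h1 h2]] := IH.
  by move=> l' u hl hu; apply: H => //; rewrite in_cons hl orbT.
exists (Num.max l x); split.
  move=> l'; rewrite in_cons => /orP [/eqP -> | /h1 h]; first by rewrite le_max lexx.
  by rewrite le_max h orbT.
move=> u hu; rewrite ge_max h2 // andbT; apply: H => //; exact: mem_head.
Qed.

Lemma farkas0 (R : realFieldType) (s : seq ('rV[R]_0 * R)) :
  ~ (exists x, feas s x) -> exists b, b < 0 /\ deriv s 0 b.
Proof.
move=> nf; case: (boolP (has (fun p => p.2 < 0) s)) => [/hasP [p ps pneg] | /hasPn H].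
  exists p.2; split => //.
  have -> : (0 : 'rV[R]_0) = p.1 by apply/matrixP => i [].
  exact: dIn.
exfalso; apply: nf; exists 0 => p ps.
by rewrite mulmx0 mxE leNgt H.
Qed.
Definition co {R : realFieldType} {n : nat} (p : 'rV[R]_(1 + n) * R) : R := (lsubmx p.1) 0 0.
Definition re {R : realFieldType} {n : nat} (p : 'rV[R]_(1 + n) * R) : 'rV[R]_n := rsubmx p.1.
Definition cv {R : realFieldType} {n : nat} (p q : 'rV[R]_(1 + n) * R) : 'rV[R]_(1 + n) :=
  (- co q) *: p.1 + co p *: q.1.
Definition cb {R : realFieldType} {n : nat} (p q : 'rV[R]_(1 + n) * R) : R :=
  (- co q) * p.2 + co p * q.2.
Definition Pp {R : realFieldType} {n : nat} (s : seq ('rV[R]_(1 + n) * R)) :=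
  [seq p <- s | 0 < co p].
Definition Nn {R : realFieldType} {n : nat} (s : seq ('rV[R]_(1 + n) * R)) :=
  [seq p <- s | co p < 0].
Definition elim1 {R : realFieldType} {n : nat} (s : seq ('rV[R]_(1 + n) * R)) :
  seq ('rV[R]_n * R) :=
  [seq (re p, p.2) | p <- s & co p == 0] ++
  [seq (rsubmx (cv p q), cb p q) | p <- Pp s, q <- Nn s].

Lemma mul_split {R : realFieldType} {n : nat} (a : 'rV[R]_(1 + n)) x0 (x' : 'cV[R]_n) :
  (a *m col_mx x0%:M x') 0 0 = (lsubmx a) 0 0 * x0 + (rsubmx a *m x') 0 0.
Proof.
by rewrite -{1}(hsubmxK a) mul_row_col mxE mul_mx_scalar mxE mulrC.
Qed.

Lemma lsub_cv {R : realFieldType} {n : nat} (p q : 'rV[R]_(1 + n) * R) :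
  lsubmx (cv p q) = 0.
Proof.
apply/matrixP => i j; rewrite !ord1 /cv /co !mxE.
ring.
Qed.

Lemma rsub_cv {R : realFieldType} {n : nat} (p q : 'rV[R]_(1 + n) * R) :
  rsubmx (cv p q) = (- co q) *: re p + co p *: re q.
Proof. by apply/matrixP => i j; rewrite /cv /re !mxE. Qed.

Lemma row0_eq {R : realFieldType} {n : nat} (a : 'rV[R]_(1 + n)) :
  lsubmx a = 0 -> row_mx 0 (rsubmx a) = a.
Proof. by move=> h; rewrite -{2}(hsubmxK a) h. Qed.

Lemma stepA {R : realFieldType} {n : nat} (s : seq ('rV[R]_(1 + n) * R)) a b :
  deriv (elim1 s) a b -> deriv s (row_mx 0 a) b.
Proof.
elim => {a b}.
- move=> p; rewrite mem_cat => /orP [].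
    case/mapP => q; rewrite mem_filter => /andP [/eqP q0 qs] -> /=.
    rewrite row0_eq; first exact: (dIn q).
    by apply/matrixP => i j; move: q0; rewrite /co !ord1 => ->; rewrite mxE.
  case/allpairsP => [[p' q] [/= pP qN ->]] /=.
  rewrite row0_eq ?lsub_cv //.
  move: pP qN; rewrite !mem_filter => /andP [pp ps] /andP [qn qs].
  apply: dAdd; apply: dScale; try exact: dIn.
    by rewrite oppr_ge0 ltW.
  exact: ltW.
- by rewrite row_mx0; exact: dZero.
- move=> a b a' b' _ h1 _ h2.
  have -> : row_mx 0 (a + a') = row_mx 0 a + row_mx 0 a' :> 'rV[R]_(1 + n).
    by rewrite add_row_mx addr0.
  exact: dAdd.
- move=> t a b t0 _ h.
  have -> : row_mx 0 (t *: a) = t *: row_mx 0 a :> 'rV[R]_(1 + n).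
    by rewrite scale_row_mx scaler0.
  exact: dScale.
- move=> a b b' _ h hb; exact: dWeak h hb.
Qed.

Lemma stepB {R : realFieldType} {n : nat} (s : seq ('rV[R]_(1 + n) * R)) x' :
  feas (elim1 s) x' -> exists x, feas s x.
Proof.
move=> fx.
pose r p := (re p *m x') 0 0.
pose bd p := (p.2 - r p) / co p.
have bdE p : co p != 0 -> bd p * co p = p.2 - r p.
  by move=> h; rewrite /bd divfK.
have [|x0 [hl hu]] := @sandwich R [seq bd q | q <- Nn s] [seq bd p | p <- Pp s].
  move=> l u /mapP [q qN ->] /mapP [p pP ->].
  have h : (rsubmx (cv p q) *m x') 0 0 <= cb p q.
    apply: (fx (_, _)); rewrite mem_cat; apply/orP; right; apply/allpairsP.
    by exists (p, q).
  rewrite /= rsub_cv mulmxDl -!scalemxAl mxE [X in X + _]mxE [X in _ + X]mxE /cb in h.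
  move: pP qN; rewrite !mem_filter => /andP [pp _] /andP [qn _].
  have e1 := bdE p (lt0r_neq0 pp). have e2 := bdE q (ltr0_neq0 qn).
  rewrite -/(r p) -/(r q) in h.
  move: h e1 e2; rewrite /r.
  move: (bd p) (bd q) (co p) (co q) (p.2) (q.2) ((re p *m x') 0 0) ((re q *m x') 0 0) pp qn.
  move=> a a' c c' p2 q2 rp rq cp cq h e1 e2.
  have h3 : 0 <= c * c' * (a' - a).
    have -> : c * c' * (a' - a) = c * (a' * c') - c' * (a * c) by ring.
    rewrite e1 e2; lra.
  have h4 : c * c' < 0 by rewrite pmulr_rlt0.
  rewrite -subr_le0 leNgt; apply/negP => h5.
  have : c * c' * (a' - a) < 0 by rewrite nmulr_rlt0.
  lra.
exists (col_mx x0%:M x') => p ps.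
rewrite mul_split.
have hc : co p = (lsubmx p.1) 0 0 by [].
rewrite -hc.
case: (ltgtP (co p) 0) => hp.
- have := hl (bd p); rewrite map_f ?mem_filter ?hp // => /(_ isT) h.
  have e := bdE p (ltr0_neq0 hp); rewrite -/(r p) in e *. nra.
- have := hu (bd p); rewrite map_f ?mem_filter ?hp // => /(_ isT) h.
  have e := bdE p (lt0r_neq0 hp); rewrite -/(r p) in e *. nra.
- rewrite hp mul0r add0r.
  have := fx (re p, p.2); rewrite mem_cat map_f ?mem_filter ?hp ?eqxx //.
  by move=> /(_ isT).
Qed.

Lemma farkas {R : realFieldType} (n : nat) (s : seq ('rV[R]_n * R)) :
  ~ (exists x, feas s x) -> exists b, b < 0 /\ deriv s 0 b.
Proof.
elim: n s => [|n IH] s nf; first exact: farkas0.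
have [|b [bneg hb]] := IH (@elim1 R n s).
  by case=> x' /stepB; exact: nf.
exists b; split => //.
have := @stepA R n s 0 b hb; rewrite row_mx0; exact.
Qed.

Definition lpsys {R : realFieldType} {m n : nat} (A : 'M[R]_(m, n)) (b : 'cV[R]_m)
  (c : 'rV[R]_n) (t : R) : seq ('rV[R]_n * R) :=
  [seq (row i A, b i 0) | i <- enum 'I_m] ++
  [seq (- delta_mx 0 j, 0) | j <- enum 'I_n] ++ [:: (-c, -t)].

Lemma delta_ge0 {R : realFieldType} {n : nat} (j : 'I_n) k :
  0 <= (delta_mx 0 j : 'rV[R]_n) 0 k.
Proof. by rewrite mxE; case: (_ && _). Qed.

Lemma lp_inv {R : realFieldType} {m n : nat} (A : 'M[R]_(m, n)) b c t a be :
  deriv (lpsys A b c t) a be ->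
  exists (y : 'rV[R]_m) (mu : 'rV[R]_n) (k : R), [/\ (forall i, 0 <= y 0 i), (forall j, 0 <= mu 0 j), 0 <= k,
    a = y *m A - mu - k *: c & (y *m b) 0 0 - k * t <= be].
Proof.
elim => {a be}.
- move=> p; rewrite !mem_cat => /or3P [].
  + case/mapP => i _ ->; exists (delta_mx 0 i), 0, 0; split => //=.
    * by move=> k; exact: delta_ge0.
    * by move=> j; rewrite mxE.
    * by rewrite subr0 scale0r subr0 rowE.
    * by rewrite mul0r subr0 -rowE mxE.
  + case/mapP => j _ ->; exists 0, (delta_mx 0 j), 0; split => //=.
    * by move=> k; rewrite mxE.
    * by move=> k; exact: delta_ge0.
    * by rewrite mul0mx sub0r scale0r subr0.
    * by rewrite mul0mx mxE mul0r subr0.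
  + rewrite inE => /eqP ->; exists 0, 0, 1; split => //=.
    * by move=> k; rewrite mxE.
    * by move=> k; rewrite mxE.
    * by rewrite mul0mx subr0 sub0r scale1r.
    * by rewrite mul0mx mxE mul1r sub0r.
- exists 0, 0, 0; split => //.
  + by move=> k; rewrite mxE.
  + by move=> k; rewrite mxE.
  + by rewrite mul0mx subr0 scale0r subr0.
  + by rewrite mul0mx mxE mul0r subr0.
- move=> a be a' be' _ [y [mu [k [hy hmu hk ea eb]]]] _ [y' [mu' [k' [hy' hmu' hk' ea' eb']]]].
  exists (y + y'), (mu + mu'), (k + k'); split.
  + by move=> i; rewrite mxE addr_ge0.
  + by move=> i; rewrite mxE addr_ge0.
  + by rewrite addr_ge0.
  + rewrite ea ea' mulmxDl; apply/matrixP => i j; rewrite !mxE; ring.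
  + have e : ((y + y') *m b) 0 0 = (y *m b) 0 0 + (y' *m b) 0 0.
      by rewrite mulmxDl [LHS]mxE.
    rewrite e; lra.
- move=> s a be s0 _ [y [mu [k [hy hmu hk ea eb]]]].
  exists (s *: y), (s *: mu), (s * k); split.
  + by move=> i; rewrite mxE mulr_ge0.
  + by move=> i; rewrite mxE mulr_ge0.
  + by rewrite mulr_ge0.
  + rewrite ea -scalemxAl; apply/matrixP => i j; rewrite !mxE; ring.
  + have e : ((s *: y) *m b) 0 0 = s * (y *m b) 0 0 by rewrite -scalemxAl [LHS]mxE.
    rewrite e.
    have : s * ((y *m b) 0 0 - k * t) <= s * be by rewrite ler_wpM2l.
    lra.
- move=> a be be' _ [y [mu [k [hy hmu hk ea eb]]]] hb.
  exists y, mu, k; split => //; exact: le_trans hb.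
Qed.

Lemma dual_exists (R : realType) (m n : nat) (A : 'M[R]_(m, n)) b c (x0 : 'cV[R]_n) t :
  primal_feasible A b x0 ->
  (forall x, primal_feasible A b x -> primal_obj c x < t) ->
  exists y, dual_feasible A c y /\ dual_obj b y < t.
Proof.
move=> fx0 H.
have nf : ~ exists x, feas (lpsys A b c t) x.
  case=> x fx.
  have pf : primal_feasible A b x.
    split.
      move=> i; have := fx (row i A, b i 0).
      rewrite mem_cat map_f ?mem_enum // => /(_ isT) /=.
      by rewrite -row_mul mxE.
    move=> j; have := fx (- delta_mx 0 j, 0).
    rewrite !mem_cat map_f ?mem_enum ?orbT // => /(_ isT) /=.
    by rewrite mulNmx -rowE !mxE oppr_le0.
  have := fx (-c, -t); rewrite !mem_cat mem_seq1 eqxx !orbT => /(_ isT) /=.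
  rewrite mulNmx mxE lerN2 => h.
  by have := H x pf; rewrite /primal_obj ltNge h.
have [be [beneg /lp_inv [y [mu [k [hy hmu hk ea eb]]]]]] := @farkas R n _ nf.
have yA : y *m A = mu + k *: c.
  by apply/eqP; rewrite -subr_eq0 opprD addrA -ea eqxx.
case: (ltgtP k 0) => hk'.
- by rewrite ltNge hk in hk'.
- exists (k^-1 *: y); split; first split.
  + move=> j; rewrite -scalemxAl yA !mxE mulrDr mulrA mulVf ?lt0r_neq0 // mul1r.
    by rewrite lerDr mulr_ge0 // invr_ge0 ltW.
  + by move=> i; rewrite mxE mulr_ge0 // invr_ge0 ltW.
  + rewrite /dual_obj -scalemxAl mxE.
    have hu : k^-1 * k = 1 by rewrite mulVf ?lt0r_neq0.
    have hu0 : 0 < k^-1 by rewrite invr_gt0.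
    move: hu hu0 eb; move: (k^-1) ((y *m b) 0 0) => u Y hu hu0 eb.
    have h1 : Y < k * t by lra.
    have : u * Y < u * (k * t) by rewrite ltr_pM2l.
    rewrite mulrA hu mul1r //.
- exfalso.
  rewrite hk' scale0r addr0 in yA.
  have h1 : 0 <= (y *m b) 0 0.
    apply: (@le_trans _ _ (((y *m A) *m x0) 0 0)).
      rewrite yA mxE; apply: sumr_ge0 => j _; apply: mulr_ge0 => //.
      by case: fx0.
    rewrite -mulmxA !mxE; apply: ler_sum => i _; apply: ler_wpM2l => //.
    by case: fx0.
  move: eb; rewrite hk' mul0r subr0 => eb; lra.
Qed.

Lemma strong_dual (R : realType) (m n : nat) (A : 'M[R]_(m, n)) b c xs ys :
  primal_optimal A b c xs -> dual_optimal A b c ys -> dual_obj b ys <= primal_obj c xs.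
Proof.
move=> [fxs oxs] [fys oys]; rewrite leNgt; apply/negP => h.
have [|y [fy hy]] := @dual_exists R m n A b c xs (dual_obj b ys) fxs.
  by move=> x fx; exact: le_lt_trans (oxs x fx) h.
by have := oys y fy; rewrite leNgt hy.
Qed.

Lemma sqrt_sum_le (R : realType) (I : finType) (P : pred I) (w : I -> R) :
  (forall i, P i -> 0 <= w i) ->
  Num.sqrt (\sum_(i | P i) w i ^+ 2) <= \sum_(i | P i) w i.
Proof.
move=> hw.
have [h0 h1] : 0 <= \sum_(i | P i) w i /\
  \sum_(i | P i) w i ^+ 2 <= (\sum_(i | P i) w i) ^+ 2.
  apply: (big_rec2 (fun a s => 0 <= s /\ a <= s ^+ 2)).
    by rewrite expr0n /= lexx.
  move=> i a s Pi [hs ha]; have := hw i Pi => hi; split; first exact: addr_ge0.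
  rewrite sqrrD; nra.
rewrite -(ger0_norm h0) -sqrtr_sqr ler_sqrt //; exact: sqr_ge0.
Qed.

Lemma alpha_props (R : realType) (m : nat) (y : 'rV[R]_m) :
  0 <= alphaD y /\ forall i, 0 < y 0 i -> alphaD y <= y 0 i.
Proof.
rewrite /alphaD; case: pickP => [j0 hj0 | hn].
  split.
    apply: (big_ind (fun v => 0 <= v)); first exact: ltW.
      by move=> u v hu hv; rewrite le_min hu hv.
    by move=> i hi; exact: ltW.
  by move=> i hi; exact: bigmin_le_cond.
by split => // i hi; move: (hn i); rewrite hi.
Qed.

Lemma obj_le (R : realType) (m n : nat) (A : 'M[R]_(m, n)) c (ys : 'rV[R]_m) (x : 'cV[R]_n) :
  dual_feasible A c ys -> (forall j, 0 <= x j 0) ->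
  primal_obj c x <= \sum_i ys 0 i * (A *m x) i 0.
Proof.
move=> [hc _] hx.
have -> : \sum_i ys 0 i * (A *m x) i 0 = ((ys *m A) *m x) 0 0.
  by rewrite -mulmxA [RHS]mxE.
rewrite /primal_obj !mxE; apply: ler_sum => j _; exact: ler_wpM2r.
Qed.

Theorem mainTheorem12 (R : realType) (m n : nat)
  (A : 'M[R]_(m, n)) (b : 'cV[R]_m) (c : 'rV[R]_n)
  (xs : 'cV[R]_n) (ys : 'rV[R]_m) :
  primal_bounded A b c ->
  unique_primal_optimum A b c xs ->
  unique_dual_optimum A b c ys ->
  forall x : 'cV[R]_n, primal_feasible A b x ->
  primal_obj c (xs - x) >= alphaD ys * normAV A ys (xs - x).
Proof.
move=> _ [oxs _] [oys _] x fx.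
have sd := @strong_dual R m n A b c xs ys oxs oys.
have [[fAxs fxs] _] := oxs.
have [fys' fys] := oys.
have [hAx hx] := fx.
have [_ ys0] := fys'.
have dob : dual_obj b ys = \sum_i ys 0 i * b i 0 by rewrite /dual_obj mxE.
have cs : forall i, 0 < ys 0 i -> (A *m xs) i 0 = b i 0.
  have hs : \sum_i (ys 0 i * b i 0 - ys 0 i * (A *m xs) i 0) = 0.
    apply/eqP; rewrite eq_le; apply/andP; split.
      rewrite sumrB -dob subr_le0; apply: le_trans sd _; exact: (@obj_le R m n A c ys xs).
    apply: sumr_ge0 => i _; rewrite subr_ge0; exact: ler_wpM2l.
  move=> i hi.
  have hpos : forall j, predT j -> 0 <= ys 0 j * b j 0 - ys 0 j * (A *m xs) j 0.
    by move=> j _; rewrite subr_ge0 ler_wpM2l.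
  have := @psumr_eq0P _ _ predT (fun j => ys 0 j * b j 0 - ys 0 j * (A *m xs) j 0) hpos hs i isT.
  rewrite -mulrBr => /eqP; rewrite mulf_eq0 (gt_eqF hi) /= subr_eq0 => /eqP ->//.
have eAB : forall i, (A *m (xs - x)) i 0 = (A *m xs) i 0 - (A *m x) i 0.
  by move=> i; rewrite mulmxBr !mxE.
have w0 : forall i, 0 < ys 0 i -> 0 <= (A *m (xs - x)) i 0.
  by move=> i hi; rewrite eAB cs // subr_ge0 hAx.
have [a0 ale] := @alpha_props R m ys.
rewrite /normAV.
apply: le_trans (_ : alphaD ys * \sum_(i | 0 < ys 0 i) (A *m (xs - x)) i 0 <= _).
  by apply: ler_wpM2l => //; apply: sqrt_sum_le.
rewrite mulr_sumr.
apply: le_trans (_ : \sum_(i | 0 < ys 0 i) ys 0 i * (A *m (xs - x)) i 0 <= _).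
  by apply: ler_sum => i hi; apply: ler_wpM2r; [exact: w0 | exact: ale].
apply: le_trans (_ : \sum_i ys 0 i * (b i 0 - (A *m x) i 0) <= _).
  rewrite [X in _ <= X](bigID (fun i => 0 < ys 0 i)) /= -[X in X <= _]addr0.
  apply: lerD.
    by apply: ler_sum => i hi; rewrite eAB cs.
  apply: sumr_ge0 => i _; apply: mulr_ge0 => //; by rewrite subr_ge0.
have -> : primal_obj c (xs - x) = primal_obj c xs - primal_obj c x.
  by rewrite /primal_obj mulmxBr !mxE.
under eq_bigr do rewrite mulrBr.
rewrite sumrB -dob.
have := @obj_le R m n A c ys x fys' hx.
lra.
Qed.
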